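(* Let $D$ be a category, and consider the natural functor: $$j=j_D:\overline{\mathrm{Pro}}(\mathcal{C}^D) \to \overline{\mathrm{Pro}}(\mathcal{C})^{D}.$$ Then the following hold: \begin{enumerate} \item If $D$ has a finite number of objects then $j_D$ is faithful. \item If $D$ is finite then $j_D$ is full and faithful. \end{enumerate}
   Context: Let $\mathcal{C}$ be a category. $\overline{\mathrm{Pro}}(\mathcal{C})$ has objects diagrams $F:A\to\mathcal{C}$ with $A$ a cofinite directed poset of infinite height (poset as category with $u\to v$ iff $u\ge v$), and morphisms $F^A\to G^B$ the classes $[\alpha,\phi]$ of pairs with $\alpha:B\to A$ strictly increasing and $\phi:F\circ\alpha\to G$ natural, identified along chains of relations $(\alpha',\phi')\ge(\alpha,\phi)$ (meaning $\alpha'\ge\alpha$ pointwise and $\phi'_b=\phi_b\circ F(\alpha'(b)\to\alpha(b))$). An object $X^A$ of $\overline{\mathrm{Pro}}(\mathcal{C}^D)$ is viewed as a functor $X:A\times D\to\mathcal{C}$; the functor $j_D$ sends it to the functor $D\to\overline{\mathrm{Pro}}(\mathcal{C})$, $d\mapsto X_d=X(-,d):A\to\mathcal{C}$, and sends a morphism $[\alpha,\phi]$ to the natural transformation with components $[\alpha,\phi(-,d)]$. *)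

(* Defs.v *)
From Stdlib Require Import List Relations Classical ProofIrrelevance.
Set Implicit Arguments.
Unset Strict Implicit.

Record Category := {
  Ob : Type;
  Hom : Ob -> Ob -> Type;
  cid : forall x, Hom x x;
  ccomp : forall x y z, Hom y z -> Hom x y -> Hom x z }.
Arguments Hom : clear implicits.
Arguments cid {c} x.
Arguments ccomp {c x y z} _ _.

Record IsCategory (C : Category) : Prop := {
  comp_id_l : forall x y (f : Hom C x y), ccomp (cid y) f = f;
  comp_id_r : forall x y (f : Hom C x y), ccomp f (cid x) = f;
  comp_assoc : forall w x y z (h : Hom C y z) (g : Hom C x y) (f : Hom C w x),
      ccomp h (ccomp g f) = ccomp (ccomp h g) f }.

Definition finite_objects (D : Category) : Prop :=
  exists l : list (Ob D), forall x, In x l.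
Definition finite_category (D : Category) : Prop :=
  finite_objects D /\ forall x y, exists l : list (Hom D x y), forall f, In f l.

Record Functor (D C : Category) := {
  fob : Ob D -> Ob C;
  fmap : forall x y, Hom D x y -> Hom C (fob x) (fob y);
  fmap_id : forall x, fmap (cid x) = cid (fob x);
  fmap_comp : forall x y z (g : Hom D y z) (f : Hom D x y),
      fmap (ccomp g f) = ccomp (fmap g) (fmap f) }.
Arguments fmap {D C} f0 {x y} _.

Record NatTrans (D C : Category) (F G : Functor D C) := {
  ncomp : forall d, Hom C (fob F d) (fob G d);
  nnat : forall d d' (g : Hom D d d'),
      ccomp (ncomp d') (fmap F g) = ccomp (fmap G g) (ncomp d) }.

Definition NatId (D C : Category) (HC : IsCategory C) (F : Functor D C) : NatTrans F F.
Proof.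
  refine {| ncomp := fun d => cid (fob F d) |}.
  intros d d' g. rewrite (comp_id_l HC), (comp_id_r HC). reflexivity.
Defined.

Definition NatComp (D C : Category) (HC : IsCategory C) (F G H : Functor D C)
  (s : NatTrans G H) (t : NatTrans F G) : NatTrans F H.
Proof.
  refine {| ncomp := fun d => ccomp (ncomp s d) (ncomp t d) |}.
  intros d d' g.
  rewrite <- (comp_assoc HC), (nnat t), (comp_assoc HC), (nnat s), (comp_assoc HC).
  reflexivity.
Defined.

Definition FunCat (D C : Category) (HC : IsCategory C) : Category :=
  {| Ob := Functor D C;
     Hom := @NatTrans D C;
     cid := @NatId D C HC;
     ccomp := fun F G H s t => @NatComp D C HC F G H s t |}.

Definition plt (A : Type) (le : A -> A -> Prop) (x y : A) : Prop := le x y /\ x <> y.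

Record CDPoset (A : Type) (le : A -> A -> Prop) : Prop := {
  le_refl : forall a, le a a;
  le_antisym : forall a b, le a b -> le b a -> a = b;
  le_trans : forall a b c, le a b -> le b c -> le a c;
  directed_nonempty : inhabited A;
  directed : forall a b, exists c, le a c /\ le b c;
  cofinite : forall a, exists l : list A, forall b, le b a -> In b l;
  inf_height : forall n : nat, exists s : nat -> A,
      forall i, i < n -> plt le (s i) (s (S i)) }.

(** * Objects of Pro-bar(C): diagrams F : A -> C, where u -> v iff u >= v,
    i.e. a morphism F u -> F v whenever [ple v u]. *)
Record ProObj (C : Category) := {
  pidx : Type;
  ple : pidx -> pidx -> Prop;
  pprops : CDPoset ple;
  pob : pidx -> Ob C;
  pmap : forall u v, ple v u -> Hom C (pob u) (pob v);
  pmap_id : forall u (h : ple u u), pmap h = cid (pob u);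
  pmap_comp : forall u v w (h1 : ple v u) (h2 : ple w v) (h3 : ple w u),
      pmap h3 = ccomp (pmap h2) (pmap h1) }.
Arguments ple {C} p _ _.
Arguments pob {C} p _.
Arguments pmap {C} p {u v} _ : rename.
Arguments pmap_id {C} p {u} h : rename.
Arguments pmap_comp {C} p {u v w} h1 h2 h3 : rename.

(** Representatives (alpha, phi) of morphisms F^A -> G^B. *)
Record ProMor (C : Category) (F G : ProObj C) := {
  palpha : pidx G -> pidx F;
  palpha_strict : forall b b', plt (ple G) b b' -> plt (ple F) (palpha b) (palpha b');
  pphi : forall b, Hom C (pob F (palpha b)) (pob G b);
  pphi_nat : forall b b' (h : ple G b' b) (h' : ple F (palpha b') (palpha b)),
      ccomp (pmap G h) (pphi b) = ccomp (pphi b') (pmap F h') }.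
Arguments palpha {C F G} f _ : rename.
Arguments pphi {C F G} f _ : rename.
Arguments palpha_strict {C F G} f {b b'} _ : rename.
Arguments pphi_nat {C F G} f {b b'} h h' : rename.

Definition mor_ge (C : Category) (F G : ProObj C) (f' f : ProMor F G) : Prop :=
  exists H : forall b, ple F (palpha f b) (palpha f' b),
    forall b, pphi f' b = ccomp (pphi f b) (pmap F (H b)).

(** Equality of morphisms of Pro-bar(C): equivalence relation generated by >=. *)
Definition mor_equiv (C : Category) (F G : ProObj C) : relation (ProMor F G) :=
  clos_refl_sym_trans _ (@mor_ge C F G).

Lemma strict_mono (C : Category) (F G : ProObj C) (f : ProMor F G) b b' :
  ple G b' b -> ple F (palpha f b') (palpha f b).
Proof.
  intro h. destruct (classic (b' = b)) as [e|ne].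
  - subst. apply (le_refl (pprops F)).
  - apply (palpha_strict f). split; assumption.
Qed.

Definition ProComp (C : Category) (HC : IsCategory C) (F G H : ProObj C)
  (f : ProMor F G) (g : ProMor G H) : ProMor F H.
Proof.
  refine {| palpha := fun c => palpha f (palpha g c);
            pphi := fun c => ccomp (pphi g c) (pphi f (palpha g c)) |}.
  - intros b b' h. apply (palpha_strict f), (palpha_strict g), h.
  - intros c c' h h'.
    pose proof (strict_mono g h) as hg.
    rewrite (comp_assoc HC), (pphi_nat g h hg).
    rewrite <- !(comp_assoc HC), (pphi_nat f hg h'). reflexivity.
Defined.

Section J.
Variables (D C : Category) (HC : IsCategory C).

Definition jOb (X : ProObj (FunCat D HC)) (d : Ob D) : ProObj C.
Proof.
  refine {| pidx := pidx X; ple := ple X; pprops := pprops X;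
            pob := fun u => fob (pob X u) d;
            pmap := fun u v h => ncomp (pmap X h) d |}.
  - intros u h. rewrite (pmap_id X). reflexivity.
  - intros u v w h1 h2 h3. rewrite (pmap_comp X h1 h2 h3). reflexivity.
Defined.

Definition jMor (X Y : ProObj (FunCat D HC)) (f : ProMor X Y) (d : Ob D)
  : ProMor (jOb X d) (jOb Y d).
Proof.
  refine {| palpha := palpha f : pidx (jOb Y d) -> pidx (jOb X d);
            pphi := fun b => ncomp (pphi f b) d |}.
  - intros b b'; exact (palpha_strict f).
  - intros b b' h h'. exact (f_equal (fun t => ncomp t d) (pphi_nat f h h')).
Defined.

(** The action of a morphism g : d -> d' of D on j_D X: the class [id, X(-,g)]. *)
Definition jFun (X : ProObj (FunCat D HC)) (d d' : Ob D) (g : Hom D d d')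
  : ProMor (jOb X d) (jOb X d').
Proof.
  refine {| palpha := fun u : pidx (jOb X d') => (u : pidx (jOb X d));
            pphi := fun u => fmap (pob X u) g |}.
  - intros b b' h. exact h.
  - intros b b' h h'. simpl in *.
    rewrite (proof_irrelevance _ h' h). apply (nnat (pmap X h)).
Defined.

Definition is_natural (X Y : ProObj (FunCat D HC))
  (eta : forall d, ProMor (jOb X d) (jOb Y d)) : Prop :=
  forall d d' (g : Hom D d d'),
    mor_equiv (ProComp HC (jFun X g) (eta d')) (ProComp HC (eta d) (jFun Y g)).

Definition j_faithful : Prop :=
  forall (X Y : ProObj (FunCat D HC)) (f g : ProMor X Y),
    (forall d, mor_equiv (jMor f d) (jMor g d)) -> mor_equiv f g.

Definition j_full : Prop :=
  forall (X Y : ProObj (FunCat D HC)) (eta : forall d, ProMor (jOb X d) (jOb Y d)),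
    is_natural eta -> exists f : ProMor X Y, forall d, mor_equiv (jMor f d) (eta d).
End J.

(* Main.v *)
Require Import Defs.
From Stdlib Require Import Arith List Relations Classical ProofIrrelevance ClassicalEpsilon FunctionalExtensionality Lia.

Section Poset.
Variables (A : Type) (le : A -> A -> Prop) (HA : CDPoset le).

Lemma ub_list : forall l : list A, exists c, forall x, In x l -> le x c.
Proof.
  induction l as [|a l IHl].
  - destruct (directed_nonempty HA) as [x]. exists x. intros _ [].
  - destruct IHl as [c Hc]. destruct (directed HA a c) as [e [H1 H2]].
    exists e. intros x [<-|Hx]; auto. eapply (le_trans HA); eauto.
Qed.

Lemma plt_le_trans a b c : plt le a b -> le b c -> plt le a c.
Proof.
  intros [H1 H2] H3. split. eapply (le_trans HA); eauto.
  intro e; subst. apply H2. apply (le_antisym HA); auto.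
Qed.

Lemma le_plt_trans a b c : le a b -> plt le b c -> plt le a c.
Proof.
  intros H1 [H2 H3]. split. eapply (le_trans HA); eauto.
  intro e; subst. apply H3. apply (le_antisym HA); auto.
Qed.

Lemma remove_one (T : Type) (b : T) (l : list T) : In b l ->
  exists l', length l' < length l /\ forall x, In x l -> x <> b -> In x l'.
Proof.
  induction l as [|a l IHl]; simpl; [tauto|]. intros [<-|H].
  - exists l; split; auto. intros x [<-|Hx] Hne; [congruence|auto].
  - destruct (IHl H) as [l' [Hlen Hin]]. exists (a::l'); simpl; split; [lia|].
    intros x [<-|Hx] Hne; auto.
Qed.

Lemma pigeon : forall m (s : nat -> A), (forall i j, i < j <= m -> s i <> s j) ->
  forall l, (forall i, i <= m -> In (s i) l) -> m < length l.
Proof.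
  induction m; intros s Hs l Hl.
  - destruct l; [destruct (Hl 0 (le_n 0))|simpl; lia].
  - destruct (@remove_one _ (s (S m)) l (Hl _ (le_n _))) as [l' [Hlen Hin]].
    assert (m < length l'); [|lia].
    apply IHm with s. intros; apply Hs; lia.
    intros i Hi; apply Hin; [apply Hl; lia | apply Hs; lia].
Qed.

Lemma no_max : forall x, exists y, plt le x y.
Proof.
  intro x. apply NNPP; intro Hn.
  assert (Hmax : forall y, le x y -> y = x).
  { intros y Hy. apply NNPP; intro Hne. apply Hn; exists y; split; auto. }
  assert (Hall: forall z, le z x).
  { intro z; destruct (directed HA x z) as [c [H1 H2]]. rewrite <- (Hmax c H1); auto. }
  destruct (cofinite HA x) as [l Hl]. destruct (inf_height HA (length l)) as [s Hs].
  assert (Hch : forall k i, i + S k <= length l -> plt le (s i) (s (i + S k))).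
  { induction k; intros i Hi.
    - replace (i + 1) with (S i) by lia. apply Hs; lia.
    - replace (i + S (S k)) with (S (i + S k)) by lia.
      eapply le_plt_trans. apply IHk; lia. apply Hs; lia. }
  assert (length l < length l); [|lia].
  apply pigeon with s.
  - intros i j Hij. replace j with (i + S (j - i - 1)) by lia. apply Hch; lia.
  - intros; apply Hl; apply Hall.
Qed.

Lemma strict_up : forall l : list A, exists c, forall x, In x l -> plt le x c.
Proof.
  intro l. destruct (ub_list l) as [c Hc]. destruct (no_max c) as [y Hy].
  exists y. intros x Hx. eapply le_plt_trans; eauto.
Qed.

Lemma min_nat : forall P : nat -> Prop, (exists n, P n) -> exists n, P n /\ forall m, P m -> n <= m.
Proof.
  intros P [n Hn]. apply NNPP; intro Hno.
  assert (forall k m, m <= k -> ~ P m).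
  { induction k; intros m Hm HP; apply Hno; exists m; split; auto;
      intros m' Hm'; destruct (Nat.le_gt_cases m m'); auto; exfalso.
    - lia.
    - apply (IHk m'); auto; lia. }
  apply (H n n); auto.
Qed.

Lemma fin_ub (I : Type) (Q : I -> A -> Prop) :
  (forall i, exists a, Q i a) -> (forall i a a', Q i a -> le a a' -> Q i a') ->
  forall l : list I, exists a, forall i, In i l -> Q i a.
Proof.
  intros Hne Hup. induction l as [|i l IHl].
  - destruct (directed_nonempty HA) as [x]. exists x. intros _ [].
  - destruct IHl as [a1 H1]. destruct (Hne i) as [a2 H2].
    destruct (directed HA a1 a2) as [c [Hc1 Hc2]]. exists c.
    intros j [<-|Hj]; eauto.
Qed.

Variables (B : Type) (leB : B -> B -> Prop) (HB : CDPoset leB).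

Lemma strict_above (P : B -> A -> Prop) :
  (forall b, exists a, P b a) -> (forall b a a', P b a -> le a a' -> P b a') ->
  exists al : B -> A, (forall b b', plt leB b b' -> plt le (al b) (al b')) /\ forall b, P b (al b).
Proof.
  intros Hne Hup.
  assert (Ha0 : {a0 : B -> A | forall b, P b (a0 b)}).
  { exists (fun b => proj1_sig (constructive_indefinite_description _ (Hne b))).
    intro b; apply proj2_sig. }
  destruct Ha0 as [a0 Ha0].
  assert (Hu : {up : list A -> A | forall l x, In x l -> plt le x (up l)}).
  { exists (fun l => proj1_sig (constructive_indefinite_description _ (strict_up l))).
    intros l; apply (proj2_sig (constructive_indefinite_description _ (strict_up l))). }
  destruct Hu as [up Hup'].
  assert (Hl : {lst : B -> list B | forall b x, leB x b -> In x (lst b)}).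
  { exists (fun b => proj1_sig (constructive_indefinite_description _ (cofinite HB b))).
    intros b; apply (proj2_sig (constructive_indefinite_description _ (cofinite HB b))). }
  destruct Hl as [lst Hlst].
  pose (R := fun b n => exists l : list B, length l = n /\ forall x, leB x b -> In x l).
  assert (Hr : {r : B -> nat | forall b, R b (r b) /\ forall m, R b m -> r b <= m}).
  { assert (Hex : forall b, exists n, R b n /\ forall m, R b m -> n <= m).
    { intro b. apply min_nat. destruct (cofinite HB b) as [l Hl]. exists (length l), l; auto. }
    exists (fun b => proj1_sig (constructive_indefinite_description _ (Hex b))).
    intros b; apply (proj2_sig (constructive_indefinite_description _ (Hex b))). }
  destruct Hr as [r Hr].
  assert (Hrs : forall b b', plt leB b b' -> r b < r b').
  { intros b b' [Hle Hne'].
    destruct (Hr b') as [[l [Hlen Hl]] _].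
    destruct (@remove_one _ b' l (Hl b' (le_refl HB b'))) as [l' [Hlen' Hin]].
    assert (R b (length l')).
    { exists l'; split; auto. intros x Hx. apply Hin. apply Hl. eapply (le_trans HB); eauto.
      intro e; subst. apply Hne'. apply (le_antisym HB); auto. }
    apply (proj2 (Hr b)) in H. lia. }
  pose (T := fix T (n : nat) (b : B) {struct n} : A :=
               match n with O => a0 b | S k => up (map (T k) (lst b)) end).
  assert (Tstep : forall n b b', leB b' b -> plt le (T n b') (T (S n) b)).
  { intros n b b' H. simpl. apply Hup'. apply in_map. apply Hlst; auto. }
  assert (Tmono : forall k n b, le (T n b) (T (n + k) b)).
  { induction k; intros n b.
    - rewrite Nat.add_0_r. apply (le_refl HA).
    - eapply (le_trans HA). apply IHk. replace (n + S k) with (S (n + k)) by lia.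
      apply (Tstep _ b b (le_refl HB b)). }
  exists (fun b => T (r b) b). split.
  - intros b b' Hbb. pose proof (Hrs _ _ Hbb) as Hlt.
    destruct (r b') as [|k] eqn:E; [lia|].
    pose proof (Tmono (k - r b) (r b) b) as Hm.
    replace (r b + (k - r b)) with k in Hm by lia.
    apply le_plt_trans with (T k b). exact Hm.
    apply Tstep. apply (proj1 Hbb).
  - intro b. apply Hup with (T 0 b). apply Ha0. apply (Tmono (r b) 0 b).
Qed.
End Poset.
Set Implicit Arguments.
Unset Strict Implicit.

Definition Reqat (C : Category) (F G : ProObj C) (f g : ProMor F G) b a :=
  exists (h1 : ple F (palpha f b) a) (h2 : ple F (palpha g b) a),
    ccomp (pphi f b) (pmap F h1) = ccomp (pphi g b) (pmap F h2).
Definition Req (C : Category) (F G : ProObj C) (f g : ProMor F G) :=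
  forall b, exists a, Reqat f g b a.

Lemma pmap_irr (C : Category) (F : ProObj C) u v (h h' : ple F v u) : pmap F h = pmap F h'.
Proof. rewrite (proof_irrelevance _ h h'). reflexivity. Qed.

Section ReqS.
Variables (C : Category) (HC : IsCategory C) (F G : ProObj C).

Lemma Reqat_up (f g : ProMor F G) b a a' : Reqat f g b a -> ple F a a' -> Reqat f g b a'.
Proof.
  intros [h1 [h2 E]] Ha.
  exists (le_trans (pprops F) h1 Ha), (le_trans (pprops F) h2 Ha).
  rewrite (pmap_comp F Ha h1 (le_trans (pprops F) h1 Ha)).
  rewrite (pmap_comp F Ha h2 (le_trans (pprops F) h2 Ha)).
  rewrite !(comp_assoc HC), E. reflexivity.
Qed.

Lemma Req_of_equiv (f g : ProMor F G) : mor_equiv f g -> Req f g.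
Proof.
  induction 1 as [x y H| x | x y _ IH | x y z _ IH1 _ IH2].
  - destruct H as [H Hphi]. intro b. exists (palpha x b).
    exists (le_refl (pprops F) _), (H b).
    rewrite (pmap_id F), (comp_id_r HC), Hphi. reflexivity.
  - intro b. exists (palpha x b), (le_refl (pprops F) _), (le_refl (pprops F) _). reflexivity.
  - intro b. destruct (IH b) as [a [h1 [h2 E]]]. exists a, h2, h1. auto.
  - intro b. destruct (IH1 b) as [a1 H1]. destruct (IH2 b) as [a2 H2].
    destruct (directed (pprops F) a1 a2) as [c [Hc1 Hc2]].
    destruct (Reqat_up H1 Hc1) as [h1 [h2 E1]].
    destruct (Reqat_up H2 Hc2) as [h2' [h3 E2]].
    exists c, h1, h3. rewrite E1, (pmap_irr h2 h2'). exact E2.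
Qed.

Lemma equiv_of_Req (f g : ProMor F G) : Req f g -> mor_equiv f g.
Proof.
  intro HR.
  destruct (@strict_above _ _ (pprops F) _ _ (pprops G) (fun b a => Reqat f g b a))
    as [al [Hs HP]].
  - exact HR.
  - intros b a a' H1 H2. exact (Reqat_up H1 H2).
  - assert (Hf : forall b, ple F (palpha f b) (al b)).
    { intro b. destruct (HP b) as [h1 _]. exact h1. }
    assert (Hg : forall b, ple F (palpha g b) (al b)).
    { intro b. destruct (HP b) as [_ [h2 _]]. exact h2. }
    unshelve eset (h := {| palpha := al; palpha_strict := Hs;
                          pphi := fun b => ccomp (pphi f b) (pmap F (Hf b)) |}).
    { intros b b' h h'. simpl.
      rewrite (comp_assoc HC), (pphi_nat f h (strict_mono f h)), <- !(comp_assoc HC).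
      f_equal.
      rewrite <- (pmap_comp F (Hf b) (strict_mono f h) (le_trans (pprops F) (strict_mono f h) (Hf b))).
      rewrite <- (pmap_comp F h' (Hf b') (le_trans (pprops F) (Hf b') h')).
      apply pmap_irr. }
    apply rst_trans with h.
    + apply rst_sym, rst_step. exists Hf. intro b. reflexivity.
    + apply rst_step. exists Hg. intro b. simpl.
      destruct (HP b) as [h1 [h2 E]].
      rewrite (pmap_irr (Hf b) h1), (pmap_irr (Hg b) h2). exact E.
Qed.
End ReqS.

Lemma NatTrans_ext (D C : Category) (F G : Functor D C) (s t : NatTrans F G) :
  (forall d, ncomp s d = ncomp t d) -> s = t.
Proof.
  intro H. destruct s as [s Hs], t as [t Ht]. simpl in H.
  assert (s = t) by (apply functional_extensionality_dep; exact H). subst.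
  f_equal. apply proof_irrelevance.
Qed.

Lemma FunCat_cat (D C : Category) (HC : IsCategory C) : IsCategory (FunCat D HC).
Proof.
  constructor; intros; apply NatTrans_ext; intro d; simpl.
  - apply (comp_id_l HC).
  - apply (comp_id_r HC).
  - apply (comp_assoc HC).
Qed.

Lemma faithful_of_fin (C D : Category) (HC : IsCategory C) :
  finite_objects D -> j_faithful D HC.
Proof.
  intros [lo Hlo] X Y f g Hd.
  apply (equiv_of_Req (FunCat_cat D HC)). intro b.
  destruct (@fin_ub _ _ (pprops X) _ (fun d a => Reqat (jMor f d) (jMor g d) b a)) with lo
    as [a Ha].
  - intro d. exact (Req_of_equiv HC (Hd d) b).
  - intros d a a' H1 H2. exact (Reqat_up HC H1 H2).
  - destruct (@ub_list _ _ (pprops X) (a :: palpha f b :: palpha g b :: nil)) as [c Hc].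
    assert (Hac : ple X a c) by (apply Hc; simpl; auto).
    exists c, (Hc _ (or_intror (or_introl eq_refl))),
      (Hc _ (or_intror (or_intror (or_introl eq_refl)))).
    apply NatTrans_ext. intro d. simpl.
    destruct (Reqat_up HC (Ha d (Hlo d)) Hac) as [h1 [h2 E]].
    simpl in E.
    rewrite (pmap_irr (Hc _ _) h1), (pmap_irr (Hc _ (or_intror (or_intror (or_introl eq_refl)))) h2).
    exact E.
Qed.

Lemma full_of_fin (C D : Category) (HC : IsCategory C) :
  finite_category D -> j_full D HC.
Proof.
  intros [[lo Hlo] Hhom] X Y eta Hnat.
  pose (W := fun b d a => ple X (palpha (eta d) b) a /\
      forall d' (g : Hom D d d'),
        Reqat (ProComp HC (jFun X g) (eta d')) (ProComp HC (eta d) (jFun Y g)) b a).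
  assert (Wup : forall b d a a', W b d a -> ple X a a' -> W b d a').
  { intros b d a a' [H1 H2] Ha. split.
    - eapply (le_trans (pprops X)); eauto.
    - intros d' g. exact (Reqat_up HC (H2 d' g) Ha). }
  assert (Wne : forall b d, exists a, W b d a).
  { intros b d.
    destruct (@fin_ub _ _ (pprops X) _ (fun d' a => forall (g : Hom D d d'),
        Reqat (ProComp HC (jFun X g) (eta d')) (ProComp HC (eta d) (jFun Y g)) b a)) with lo
      as [a1 Ha1].
    - intro d'. destruct (Hhom d d') as [lh Hlh].
      destruct (@fin_ub _ _ (pprops X) _ (fun g a =>
        Reqat (ProComp HC (jFun X g) (eta d')) (ProComp HC (eta d) (jFun Y g)) b a)) with lh
        as [a2 Ha2].
      + intro g. exact (Req_of_equiv HC (Hnat d d' g) b).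
      + intros g a a' H1 H2. exact (Reqat_up HC H1 H2).
      + exists a2. intro g. apply Ha2, Hlh.
    - intros d' a a' H1 H2 g. exact (Reqat_up HC (H1 g) H2).
    - destruct (directed (pprops X) a1 (palpha (eta d) b)) as [c [Hc1 Hc2]].
      exists c. split; auto. intros d' g. exact (Reqat_up HC (Ha1 d' (Hlo d') g) Hc1). }
  destruct (@strict_above _ _ (pprops X) _ _ (pprops Y) (fun b a => forall d, W b d a))
    as [al [Hs HP]].
  - intro b. destruct (@fin_ub _ _ (pprops X) _ (W b)) with lo as [a Ha].
    + apply Wne.
    + intros; eapply Wup; eauto.
    + exists a. intro d. apply Ha, Hlo.
  - intros b a a' H1 H2 d. eapply Wup; eauto.
  - assert (Hd : forall d b, ple X (palpha (eta d) b) (al b)) by (intros d b; apply (HP b d)).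
    unshelve eset (f := {| palpha := al; palpha_strict := Hs;
       pphi := fun b => {| ncomp := fun d => ccomp (pphi (eta d) b) (ncomp (pmap X (Hd d b)) d) |} |}
       : ProMor X Y).
    + intros d d' g. simpl.
      destruct (proj2 (HP b d) d' g) as [h1 [h2 E]]. simpl in E.
      rewrite <- (comp_assoc HC), (nnat (pmap X (Hd d' b)) g), (comp_assoc HC).
      rewrite (comp_assoc HC).
      rewrite (pmap_irr (Hd d' b) h1), (pmap_irr (Hd d b) h2). exact E.
    + intros b b' h h'. apply NatTrans_ext. intro d. simpl.
      pose proof (pphi_nat (eta d) h (strict_mono (eta d) h)) as E. simpl in E.
      rewrite (comp_assoc HC), E, <- !(comp_assoc HC). f_equal.
      pose proof (pmap_comp (jOb X d) (Hd d b) (strict_mono (eta d) h)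
                    (le_trans (pprops X) (strict_mono (eta d) h) (Hd d b))) as E1.
      pose proof (pmap_comp (jOb X d) h' (Hd d b')
                    (le_trans (pprops X) (Hd d b') h')) as E2.
      simpl in E1, E2. rewrite <- E1, <- E2. f_equal. f_equal. apply proof_irrelevance.
    + exists f. intro d. apply rst_step. exists (Hd d). intro b. reflexivity.
Qed.

Theorem proposition3p18 (C D : Category) (HC : IsCategory C) (HD : IsCategory D) :
  (finite_objects D -> j_faithful D HC) /\
  (finite_category D -> j_full D HC /\ j_faithful D HC).
Proof.
  split.
  - apply faithful_of_fin.
  - intro H. split. apply full_of_fin; auto. apply faithful_of_fin, H.
Qed.
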